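(* Let $a\neq b$ be decimal digits, let $K\ge 1$ be an integer, and let $N=K\cdot 10^6+\overline{aaaaab}$, i.e. $N$ is the integer whose decimal representation is that of $K$ followed by the six digits $a,a,a,a,a,b$. If $N$ is an absolute prime, then $7\mid K$.
   Context: For a positive integer $N$ with decimal representation $d_1d_2\dots d_n$ (digits $d_k\in\{0,\dots,9\}$, $d_1\neq 0$), a permutation of the digits of $N$ is any integer $\sum_{k=1}^{n} d_{\sigma(k)}10^{n-k}$ with $\sigma$ a permutation of $\{1,\dots,n\}$. $N$ is called an absolute prime if every integer obtained by a permutation of the digits of $N$ (including $N$ itself) is prime. The notation $\overline{c_1c_2\dots c_m}$ denotes $\sum_{k=1}^m c_k10^{m-k}$. *)

(* Defs.v *)
From mathcomp Require Import all_boot.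
Set Implicit Arguments. Unset Strict Implicit. Unset Printing Implicit Defensive.

Fixpoint digits_fuel (fuel n : nat) : seq nat :=
  match fuel with
  | 0 => [::]
  | f.+1 => if n == 0 then [::] else rcons (digits_fuel f (n %/ 10)) (n %% 10)
  end.

(* decimal representation d_1 ... d_n of n (empty for n = 0) *)
Definition digits (n : nat) : seq nat := digits_fuel n n.

Definition digits_val (s : seq nat) : nat := foldl (fun acc d => acc * 10 + d) 0 s.

Definition absolute_prime (N : nat) : Prop :=
  0 < N /\ forall s : seq nat, perm_eq s (digits N) -> prime (digits_val s).

(* Main.v *)
Require Import Defs.
From mathcomp Require Import all_boot.
From mathcomp Require Import zify.

Lemma digits_fuel_indep f n : n <= f -> forall g, n <= g ->
  digits_fuel f n = digits_fuel g n.
Proof.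
elim: f n => [|f IH] n Hn [|g] Hg //=.
- by move: Hn; rewrite leqn0 => /eqP ->; case: g Hg.
- by move: Hg; rewrite leqn0 => /eqP ->.
case: eqP => // /eqP n0; congr rcons; apply: IH; rewrite -ltnS.
- apply: leq_trans Hn; rewrite ltn_divLR // ltn_Pmulr //; lia.
- apply: leq_trans Hg; rewrite ltn_divLR // ltn_Pmulr //; lia.
Qed.

Lemma digits_step K d : 1 <= K -> d < 10 -> digits (K * 10 + d) = rcons (digits K) d.
Proof.
move=> HK Hd; rewrite /digits.
have Hq : (K * 10 + d) %/ 10 = K by rewrite divnMDl // divn_small ?addn0.
have Hr : (K * 10 + d) %% 10 = d by rewrite modnMDl modn_small.
have Hle : K <= (K * 10 + d).-1 by lia.
move: Hq Hr Hle; case E: (K * 10 + d) => [|m]; first by move=> *; lia.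
move=> Hq Hr Hle /=; rewrite Hq Hr.
congr rcons; apply: digits_fuel_indep => //; lia.
Qed.

Lemma digits_val_fuel f n : n <= f -> digits_val (digits_fuel f n) = n.
Proof.
elim: f n => [|f IH] n Hn /=; first by move: Hn; rewrite leqn0 => /eqP ->.
case: eqP => [-> //|/eqP n0].
rewrite /digits_val foldl_rcons -/(digits_val _) IH.
  by rewrite -divn_eq.
rewrite -ltnS; apply: leq_trans Hn; rewrite ltn_divLR // ltn_Pmulr //; lia.
Qed.

Lemma digits_valK n : digits_val (digits n) = n.
Proof. exact: digits_val_fuel. Qed.

Lemma big_prime p : prime p -> 8 <= p -> ~~ (7 %| p) && ~~ (2 %| p).
Proof.
move=> pp Hp; apply/andP; split; apply/negP => /(prime_nt_dvdP pp) H;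
  have := H isT; lia.
Qed.

Definition g7 acc d := (acc * 10 + d) %% 7.
Definition f10 acc d := acc * 10 + d.

Lemma foldl_mod7 t K : foldl f10 K t %% 7 = foldl g7 (K %% 7) t.
Proof.
elim: t K => [|x t IH] K /=; first by [].
rewrite IH; congr foldl; rewrite /f10 /g7.
by rewrite -modnDml -modnMml modnDml.
Qed.

Lemma foldl_last2 s x K : (2 %| foldl f10 K (rcons s x)) = (2 %| x).
Proof.
rewrite foldl_rcons /f10 dvdn_addr // dvdn_mull //.
Qed.

Definition ok7 a b r :=
  [|| a == b, r == 0,
      ~~ odd b, ~~ odd a,
      foldl g7 r (rcons [:: a; a; a; a; a] b) == 0,
      foldl g7 r (rcons [:: a; a; a; a; b] a) == 0,
      foldl g7 r (rcons [:: a; a; a; b; a] a) == 0,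
      foldl g7 r (rcons [:: a; a; b; a; a] a) == 0,
      foldl g7 r (rcons [:: a; b; a; a; a] a) == 0 |
      foldl g7 r (rcons [:: b; a; a; a; a] a) == 0].

Lemma ok7_all : all (fun a => all (fun b => all (fun r => ok7 a b r) (iota 0 7))
   (iota 0 10)) (iota 0 10).
Proof. vm_compute. reflexivity. Qed.

Lemma ok7P a b r : a < 10 -> b < 10 -> r < 7 -> ok7 a b r.
Proof.
move=> Ha Hb Hr; move/allP: ok7_all => /(_ a); rewrite mem_iota Ha => /(_ isT).
move/allP => /(_ b); rewrite mem_iota Hb => /(_ isT).
by move/allP => /(_ r); rewrite mem_iota Hr => /(_ isT).
Qed.

Theorem lemma4 (a b K : nat) :
  a < 10 -> b < 10 -> a != b -> 1 <= K ->
  absolute_prime (K * 10 ^ 6 + digits_val [:: a; a; a; a; a; b]) ->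
  7 %| K.
Proof.
move=> Ha Hb Hab HK [_ AP].
set D := digits K.
have HN : K * 10 ^ 6 + digits_val [:: a; a; a; a; a; b] =
  ((((((K * 10 + a) * 10 + a) * 10 + a) * 10 + a) * 10 + a) * 10 + b).
  rewrite /digits_val /=; lia.
have HD : digits (K * 10 ^ 6 + digits_val [:: a; a; a; a; a; b]) =
   D ++ [:: a; a; a; a; a; b].
  rewrite HN !digits_step //; try lia.
  by rewrite -!cats1 -!catA.
have V : forall t, digits_val (D ++ t) = foldl (fun acc d => acc * 10 + d) K t.
  by move=> t; rewrite /digits_val foldl_cat -/(digits_val D) digits_valK.
have P : forall t, perm_eq t [:: a; a; a; a; a; b] ->
    ~~ (7 %| foldl (fun acc d => acc * 10 + d) K t) &&
    ~~ (2 %| foldl (fun acc d => acc * 10 + d) K t).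
  move=> t Ht; rewrite -V; apply: big_prime.
    by apply: AP; rewrite HD perm_cat2l.
  rewrite V; have Hs : size t = 6 by rewrite (perm_size Ht).
  case: t Ht Hs => [|x1 [|x2 [|x3 [|x4 [|x5 [|x6 [|]]]]]]] //= _ _; lia.
have R : forall t s x, t = rcons s x -> perm_eq t [:: a; a; a; a; a; b] ->
    (foldl g7 (K %% 7) t != 0) && ~~ (2 %| x).
  move=> t s x Et Ht; have /andP[h1 h2] := P _ Ht.
  apply/andP; split; first by rewrite -foldl_mod7.
  by rewrite -(foldl_last2 s x K) -Et.
have /andP[A0 B0] := R _ [:: a; a; a; a; a] b erefl (perm_refl _).
have /andP[A1 B1] := R _ [:: a; a; a; a; b] a erefl ltac:(by apply/permP=> q /=; lia).
have /andP[A2 B2] := R _ [:: a; a; a; b; a] a erefl ltac:(by apply/permP=> q /=; lia).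
have /andP[A3 B3] := R _ [:: a; a; b; a; a] a erefl ltac:(by apply/permP=> q /=; lia).
have /andP[A4 B4] := R _ [:: a; b; a; a; a] a erefl ltac:(by apply/permP=> q /=; lia).
have /andP[A5 B5] := R _ [:: b; a; a; a; a] a erefl ltac:(by apply/permP=> q /=; lia).
have := ok7P a b (K %% 7) Ha Hb (ltn_pmod K (isT : 0 < 7)).
rewrite /ok7 (negbTE Hab) (negbTE A0) (negbTE A1) (negbTE A2) (negbTE A3)
  (negbTE A4) (negbTE A5) -!dvdn2 (negbTE B0) (negbTE B1) !orFb !orbF.
by [].
Qed.
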